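(* Let $\Lambda=KQ/\langle I\rangle$ be a gentle algebra over an algebraically closed field $K$, let $\Gamma=KQ^{Aus}/\langle I^{Aus}\rangle$ be its Cohen–Macaulay Auslander algebra, and let $\Phi:\mathrm{mod}\,\Lambda\to\mathrm{mod}\,\Gamma$ be the functor described in the context. Then for every projective $\Lambda$-module $P$ the $\Gamma$-module $\Phi(P)$ is projective, and for every injective $\Lambda$-module $J$ the $\Gamma$-module $\Phi(J)$ is injective.
   Context: Conventions: arrows $\alpha:s(\alpha)\to t(\alpha)$; paths composed right to left ($\beta\alpha$ means $\alpha$ then $\beta$). A gentle algebra is a finite dimensional $\Lambda=KQ/\langle I\rangle$ where $I$ is a set of length-$2$ paths such that: each vertex is the start of at most two and the end of at most two arrows; for each arrow $\alpha$ there is at most one arrow $\beta$ with $t(\beta)=s(\alpha)$, $\alpha\beta\notin I$, at most one $\gamma$ with $s(\gamma)=t(\alpha)$, $\gamma\alpha\notin I$, at most one $\beta$ with $t(\beta)=s(\alpha)$, $\alpha\beta\in I$, and at most one $\gamma$ with $s(\gamma)=t(\alpha)$, $\gamma\alpha\in I$. Modules are finite dimensional left modules, i.e. representations of $(Q,I)$. $\mathcal{C}(\Lambda)$ is the set of repetition-free cyclic paths $\alpha_1\cdots\alpha_n$ (up to cyclic permutation) with $\alpha_i\alpha_{i+1}\in I$ for all $i$ (indices mod $n$); $Q_1^{cyc}$ is the set of arrows lying on such a cycle, $Q_1^{ncyc}=Q_1\setminus Q_1^{cyc}$. $Q^{Aus}$ has vertices $Q_0\sqcup Q_1^{cyc}$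 and arrows $Q_1^{ncyc}\sqcup\{\alpha^+:s(\alpha)\to\alpha\}_{\alpha\in Q_1^{cyc}}\sqcup\{\alpha^-:\alpha\to t(\alpha)\}_{\alpha\in Q_1^{cyc}}$; $I^{Aus}=\{\beta^+\alpha^-\mid\beta\alpha\in I,\ \alpha,\beta\in Q_1^{cyc}\}\cup\{\beta\alpha\mid\beta\alpha\in I,\ \alpha,\beta\in Q_1^{ncyc}\}$; $\Gamma=KQ^{Aus}/\langle I^{Aus}\rangle$ is (isomorphic to) the Cohen–Macaulay Auslander algebra of $\Lambda$. $\Phi(M)=\widehat{M}$ has $\widehat{M}_i=M_i$ ($i\in Q_0$), $\widehat{M}_\alpha=\mathrm{Im}\,M_\alpha$ ($\alpha\in Q_1^{cyc}$), $\widehat{M}_\beta=M_\beta$ ($\beta\in Q_1^{ncyc}$), and $\widehat{M}_{\alpha^+}$, $\widehat{M}_{\alpha^-}$ the surjection $M_{s(\alpha)}\to\mathrm{Im}\,M_\alpha$ and inclusion $\mathrm{Im}\,M_\alpha\to M_{t(\alpha)}$ factoring $M_\alpha$; morphisms go to induced morphisms. *)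

(* Defs.v *)
(* Representations of bound quivers over a field K,
   written with ROW-vector conventions: the linear map of an arrow
   a : i -> j is v |-> v *m M_a with M_a : 'M_(dim i, dim j). *)
From HB Require Import structures.
From mathcomp Require Import all_boot all_algebra.
Import GRing.Theory.
Local Open Scope ring_scope.

Record quiver := Quiver { qvert : Type; qarr : Type;
  qsrc : qarr -> qvert; qtgt : qarr -> qvert }.

(* A quiver with a set of length-2 relations: brel b a means "b a ∈ I"
   (paths composed right to left: first a, then b). *)
Record bquiver := BQuiver { bq :> quiver;
  brel : qarr bq -> qarr bq -> Prop;
  brel_comp : forall b a, brel b a -> qtgt bq a = qsrc bq b }.

Set Implicit Arguments. Unset Strict Implicit. Unset Printing Implicit Defensive.

Section Reps.
Variable K : fieldType.

Record rep (Q : quiver) := Rep { rdim : qvert Q -> nat;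
  rmap : forall a : qarr Q, 'M[K]_(rdim (qsrc Q a), rdim (qtgt Q a)) }.

Variable Q : bquiver.

Definition rcomp (M : rep Q) (b a : qarr Q) (e : qtgt Q a = qsrc Q b)
  : 'M[K]_(rdim M (qsrc Q a), rdim M (qtgt Q b)) :=
  rmap M a *m castmx (congr1 (rdim M) (esym e), erefl) (rmap M b).

Definition satisfies (M : rep Q) : Prop :=
  forall b a (h : brel Q b a), rcomp M (@brel_comp Q b a h) = 0.

Definition is_hom (M N : rep Q) (f : forall i, 'M[K]_(rdim M i, rdim N i)) : Prop :=
  forall a : qarr Q, rmap M a *m f (qtgt Q a) = f (qsrc Q a) *m rmap N a.

Definition projective_rep (P : rep Q) : Prop :=
  satisfies P /\
  forall (M N : rep Q) (g : forall i, 'M[K]_(rdim M i, rdim N i))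
         (f : forall i, 'M[K]_(rdim P i, rdim N i)),
    satisfies M -> satisfies N -> is_hom g -> is_hom f ->
    (forall i, row_full (g i)) ->   (* g surjective *)
    exists h : forall i, 'M[K]_(rdim P i, rdim M i),
      is_hom h /\ forall i, h i *m g i = f i.

Definition injective_rep (J : rep Q) : Prop :=
  satisfies J /\
  forall (L M : rep Q) (g : forall i, 'M[K]_(rdim L i, rdim M i))
         (f : forall i, 'M[K]_(rdim L i, rdim J i)),
    satisfies L -> satisfies M -> is_hom g -> is_hom f ->
    (forall i, row_free (g i)) ->   (* g injective *)
    exists h : forall i, 'M[K]_(rdim M i, rdim J i),
      is_hom h /\ forall i, g i *m h i = f i.
End Reps.

Section Gentle.
Variables (Q0 Q1 : finType) (s t : Q1 -> Q0).
(* I b a  <->  the length-2 path  b a  (first a, then b) lies in I *)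
Variable I : rel Q1.

Definition lamQ : quiver := @Quiver Q0 Q1 s t.

Definition lamBQ (HI : forall b a, I b a -> t a = s b) : bquiver :=
  @BQuiver lamQ (fun b a => I b a) HI.

(* a path a_1 a_2 ... a_n traversed in this order (a_1 first) that is
   nonzero in KQ/<I> *)
Definition nonzero_path (p : seq Q1) : Prop :=
  forall (a b : Q1) (p1 p2 : seq Q1), p = p1 ++ a :: b :: p2 ->
    t a = s b /\ ~~ I b a.

(* KQ/<I> is finite dimensional: nonzero paths have bounded length *)
Definition fin_dim : Prop :=
  exists n : nat, forall p, nonzero_path p -> (size p < n)%N.

Definition gentle : Prop :=
  (forall i : Q0, #|[pred a | s a == i]| <= 2)%N /\
  (forall i : Q0, #|[pred a | t a == i]| <= 2)%N /\
  forall a : Q1,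
    [/\ (#|[pred b | (t b == s a) && ~~ I a b]| <= 1)%N,
        (#|[pred c | (s c == t a) && ~~ I c a]| <= 1)%N,
        (#|[pred b | (t b == s a) && I a b]| <= 1)%N &
        (#|[pred c | (s c == t a) && I c a]| <= 1)%N].

Definition is_cyc (a : Q1) : Prop :=
  exists p : seq Q1, [/\ uniq p, a \in p &
    forall i, (i < size p)%N -> I (nth a p i) (nth a p (i.+1 %% size p))].

Definition cycA := {a : Q1 | is_cyc a}.
Definition ncycA := {a : Q1 | ~ is_cyc a}.

Definition ausV := (Q0 + cycA)%type.
Inductive ausA :=
  | ANc of ncycA
  | APlus of cycA
  | AMinus of cycA.

Definition ausS (x : ausA) : ausV :=
  match x with
  | ANc a => inl (s (proj1_sig a))
  | APlus a => inl (s (proj1_sig a))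
  | AMinus a => inr a
  end.
Definition ausT (x : ausA) : ausV :=
  match x with
  | ANc a => inl (t (proj1_sig a))
  | APlus a => inr a
  | AMinus a => inl (t (proj1_sig a))
  end.

Definition ausQ : quiver := @Quiver ausV ausA ausS ausT.

(* I^Aus: ausRel y x means "y x ∈ I^Aus" (first x, then y) *)
Definition ausRel (y x : ausA) : Prop :=
  match x, y with
  | AMinus a, APlus b => I (proj1_sig b) (proj1_sig a)
  | ANc a, ANc b => I (proj1_sig b) (proj1_sig a)
  | _, _ => False
  end.

Hypothesis HI : forall b a, I b a -> t a = s b.

Lemma ausRel_comp y x : ausRel y x -> ausT x = ausS y.
Proof.
case: x => a; case: y => b //= h; rewrite (HI h) //.
Qed.

Definition ausBQ : bquiver := @BQuiver ausQ ausRel ausRel_comp.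

Section Phi.
Variable K : fieldType.
Variable M : rep K lamQ.

Definition phi_dim (v : ausV) : nat :=
  match v with
  | inl i => rdim M i
  | inr a => \rank (rmap M (proj1_sig a))
  end.

(* Im M_alpha is represented by the row space of M_alpha with basis
   row_base M_alpha; M_alpha = col_base M_alpha *m row_base M_alpha is
   the factorisation surjection (col_base) followed by inclusion (row_base). *)
Definition phi_map (x : ausA) : 'M[K]_(phi_dim (ausS x), phi_dim (ausT x)) :=
  match x as x0 return 'M[K]_(phi_dim (ausS x0), phi_dim (ausT x0)) with
  | ANc a => rmap M (proj1_sig a)
  | APlus a => col_base (rmap M (proj1_sig a))
  | AMinus a => row_base (rmap M (proj1_sig a))
  end.

Definition Phi : rep K ausQ := @Rep K ausQ phi_dim phi_map.
End Phi.
End Gentle.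

(* Main.v *)
Require Import Defs.
From mathcomp Require Import all_boot all_algebra.
From Stdlib Require Import ProofIrrelevance ClassicalEpsilon.
Set Implicit Arguments. Unset Strict Implicit. Unset Printing Implicit Defensive.
Import GRing.Theory.

Module PartA.
Local Open Scope ring_scope.

Section LinAlg.
Variable K : fieldType.

Definition dl m n : 'M[K]_(m, n) := \matrix_(i < m, j < n) ((i : nat) == j)%:R.

Lemma dl_id m : dl m m = 1%:M.
Proof. by apply/matrixP => i j; rewrite !mxE. Qed.

Lemma dl_tr m n : (dl m n)^T = dl n m.
Proof. by apply/matrixP => i j; rewrite !mxE eq_sym. Qed.

Lemma dl_mul m n p : (m <= n)%N || (p <= n)%N -> dl m n *m dl n p = dl m p.
Proof.
move=> h; apply/matrixP => i j; rewrite !mxE.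
case: (boolP ((i : nat) == j)) => [/eqP eij|nij].
  have lt : ((i : nat) < n)%N.
    case/orP: h => h; first exact: leq_trans (ltn_ord i) h.
    by rewrite eij; exact: leq_trans (ltn_ord j) h.
  rewrite (bigD1 (Ordinal lt)) //= !mxE /= eqxx -eij eqxx mul1r big1 ?addr0 //.
  by move=> k nk; rewrite !mxE; case: eqP => [e|]; rewrite ?mul0r //; 
     case: eqP => [e'|]; rewrite ?mulr0 //; case/eqP: nk; apply: val_inj => /=; rewrite -e.
rewrite big1 // => k _; rewrite !mxE.
case: eqP => [e|]; rewrite ?mul0r //; case: eqP => [e'|]; rewrite ?mulr0 //.
by move: nij; rewrite e e' eqxx.
Qed.

Lemma castmx_dl m m' p (e : m = m') (B : 'M[K]_(m, p)) :
  castmx (e, erefl) B = dl m' m *m B.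
Proof. by case: m' / e; rewrite castmx_id dl_id mul1mx. Qed.

Lemma dl_commute (V : Type) (d1 d2 : V -> nat) (G : forall j, 'M[K]_(d1 j, d2 j))
   x y (e : x = y) : dl (d1 x) (d1 y) *m G y = G x *m dl (d2 x) (d2 y).
Proof. by case: y / e G => G; rewrite !dl_id mul1mx mulmx1. Qed.

Lemma satE (Q : bquiver) (M : rep K Q) :
  satisfies M <-> forall b a, brel Q b a ->
     rmap M a *m (dl (rdim M (qtgt Q a)) (rdim M (qsrc Q b)) *m rmap M b) = 0.
Proof.
split=> H b a h.
  by have := H b a h; rewrite /rcomp castmx_dl.
by rewrite /rcomp castmx_dl; apply: H.
Qed.

Lemma full_cancel m r p (C : 'M[K]_(m, r)) (X Y : 'M[K]_(r, p)) :
  row_full C -> C *m X = C *m Y -> X = Y.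
Proof.
case/row_fullP => L hL e.
by rewrite -(mul1mx X) -(mul1mx Y) -hL -!mulmxA e.
Qed.

Lemma free_cancel m r p (R : 'M[K]_(r, m)) (X Y : 'M[K]_(p, r)) :
  row_free R -> X *m R = Y *m R -> X = Y.
Proof.
case/row_freeP => L hL e.
by rewrite -(mulmx1 X) -(mulmx1 Y) -hL !mulmxA e.
Qed.

Lemma rank_sel m n (A : 'M[K]_(m, n)) (S : 'M[K]_(n, m)) : S *m A = 1%:M -> row_full A.
Proof.
move=> e; rewrite /row_full eqn_leq rank_leq_col /=.
by rewrite -{1}(mxrank1 K n) -e mxrankM_maxr.
Qed.

Lemma rank_selr m n (A : 'M[K]_(m, n)) (S : 'M[K]_(n, m)) : A *m S = 1%:M -> row_free A.
Proof.
move=> e; rewrite /row_free eqn_leq rank_leq_row /=.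
by rewrite -{1}(mxrank1 K m) -e mxrankM_maxl.
Qed.

Lemma ker_dual m1 n m2 p (A : 'M[K]_(m1, n)) (B : 'M[K]_(n, m2)) (Y : 'M[K]_(p, n)) :
  (forall q (V : 'M[K]_(q, n)), V *m A^T = 0 -> (V <= B^T)%MS) ->
  Y *m B = 0 -> (Y <= A)%MS.
Proof.
move=> H hY; rewrite submxE.
have : ((cokermx A)^T <= B^T)%MS by apply: H; rewrite -trmx_mul mulmx_coker trmx0.
case/submxP => W hW.
have -> : cokermx A = B *m W^T by rewrite -(trmxK (cokermx A)) hW trmx_mul trmxK.
by rewrite mulmxA hY mul0mx.
Qed.

End LinAlg.

End PartA.
Import PartA.

Module PartB.
Local Open Scope ring_scope.

Section Paths.
Variables (Q0 Q1 : finType) (s t : Q1 -> Q0) (I : rel Q1).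
Definition rr a b := (t a == s b) && ~~ I b a.

Lemma sorted_nz p : sorted rr p -> nonzero_path s t I p.
Proof.
move=> hs a b p1 p2 e; subst p.
have : rr a b.
  case: p1 hs => [|c p1] /=; first by case/andP.
  by rewrite cat_path /= => /and3P [_ _ /andP [h _]].
by case/andP => /eqP.
Qed.

Fixpoint allk k : seq (seq Q1) :=
  if k is k'.+1 then [seq a :: p | a <- enum Q1, p <- allk k'] else [:: [::]].

Lemma mem_allk k p : (p \in allk k) = (size p == k).
Proof.
elim: k p => [|k IH] p.
  by case: p => [|a p]; rewrite /= ?inE.
apply/allpairsP/idP => [[[b q] /= [_ hq ->]]|].
  by rewrite /= eqSS -IH.
case: p => [|a p] //=; rewrite eqSS -IH => hp; by exists (a, p); split; rewrite ?mem_enum.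
Qed.

Definition lists n := flatten [seq allk k | k <- iota 0 n].
Lemma mem_lists n p : (p \in lists n) = (size p < n)%N.
Proof.
apply/flattenP/idP => [[q /mapP [k]]|h].
  by rewrite mem_iota add0n => hk -> ; rewrite mem_allk => /eqP ->.
by exists (allk (size p)); [apply/mapP; exists (size p); rewrite ?mem_iota|rewrite mem_allk].
Qed.
End Paths.

Section Free.
Variable K : fieldType.
Variables (Q0 Q1 : finType) (s t : Q1 -> Q0) (I : rel Q1).
Hypothesis HI : forall b a, I b a -> t a = s b.
Hypothesis Huniq : forall a b b', t b = s a -> I a b -> t b' = s a -> I a b' -> b = b'.
Variable n : nat.
Hypothesis Hn : forall p, nonzero_path s t I p -> (size p < n)%N.
Variable N : rep K (lamQ s t).
Hypothesis HN : forall b a, I b a ->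
  rmap N a *m (dl K (rdim N (t a)) (rdim N (s b)) *m rmap N b) = 0.

Local Notation d := (rdim N).
Definition Dm := (\max_i d i).+1.
Lemma d_le i : (d i <= Dm)%N.
Proof. by apply: leq_trans (leq_bigmax i) _. Qed.

Definition nh a : 'M[K]_Dm := dl K Dm (d (s a)) *m rmap N a *m dl K (d (t a)) Dm.
Fixpoint nhp (p : seq Q1) : 'M[K]_Dm := if p is a :: q then nh a *m nhp q else 1%:M.
Lemma nhp_rcons p a : nhp (rcons p a) = nhp p *m nh a.
Proof. by elim: p => [|b p IH] /=; rewrite ?mul1mx ?mulmx1 // IH mulmxA. Qed.

Definition elt := ((Q0 * seq Q1) * nat)%type.
Definition wf (x : Q0 * seq Q1) :=
  sorted (rr s t I) x.2 && (if x.2 is a :: _ then s a == x.1 else true).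
Definition endv (x : Q0 * seq Q1) := last x.1 [seq t a | a <- x.2].
Definition cands : seq elt :=
  [seq (x, k) | x <- [seq (i, p) | i <- enum Q0, p <- lists Q1 n], k <- iota 0 Dm].
Definition B j : seq elt :=
  undup [seq x <- cands | wf x.1 && (endv x.1 == j) && (x.2 < d x.1.1)%N].

Lemma wf_size x : wf x -> (size x.2 < n)%N.
Proof. by case/andP => h _; apply: Hn; apply: sorted_nz. Qed.

Lemma memB j x : (x \in B j) = [&& wf x.1, endv x.1 == j & (x.2 < d x.1.1)%N].
Proof.
rewrite mem_undup mem_filter !andbA; apply/andP/idP => [[] //|h]; split => //.
case/andP: h => /andP [hw _] hk; case: x hw hk => [[i p] k] /= hw hk.
apply/allpairsP; exists ((i, p), k) => /=; split => //.
  by apply/allpairsP; exists (i, p); rewrite mem_enum mem_lists; split => //; exact: wf_size hw.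
have := leq_trans hk (d_le i); rewrite /Dm in_cons mem_iota.
by case: k {hk} => [|k] //= h; rewrite add1n ltnS.
Qed.

Lemma uniqB j : uniq (B j). Proof. exact: undup_uniq. Qed.

Definition def0 j : elt := ((j, [::]), 0%N).
Definition bn j (x : 'I_(size (B j))) := nth (def0 j) (B j) x.
Lemma bn_in j (x : 'I_(size (B j))) : bn x \in B j. Proof. exact: mem_nth. Qed.
Lemma bn_inj j (x y : 'I_(size (B j))) : bn x = bn y -> x = y.
Proof. by move/eqP; rewrite nth_uniq ?uniqB // => /eqP e; apply: val_inj. Qed.
Lemma bn_ex j e : e \in B j -> exists y : 'I_(size (B j)), bn y = e.
Proof.
move=> h; have hi : (index e (B j) < size (B j))%N by rewrite index_mem.
by exists (Ordinal hi); rewrite /bn nth_index.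
Qed.

Definition ext a (x : elt) : elt := ((x.1.1, rcons x.1.2 a), x.2).
Definition Fm j j' a : 'M[K]_(size (B j), size (B j')) :=
  \matrix_(x, y) ((ext a (bn x) == bn y)%:R).
Definition Frep : rep K (lamQ s t) := @Rep K (lamQ s t) (fun j => size (B j)) (fun a => Fm (s a) (t a) a).

Definition urow m k : 'rV[K]_m := \row_(z < m) ((z : nat) == k)%:R.
Definition gm j : 'M[K]_(size (B j), d j) :=
  \matrix_(x < size (B j)) (urow Dm (bn x).2 *m nhp (bn x).1.2 *m dl K Dm (d j)).

Lemma rowsel m (e : 'I_m -> elt) j p (G : 'M[K]_(size (B j), p)) x :
  row x ((\matrix_(x, y) ((e x == bn y)%:R)) *m G) = \sum_(y | e x == bn y) row y G.
Proof.
rewrite row_mul mulmx_sum_row (bigID (fun y => e x == bn y)) /= addrC big1 ?add0r.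
  by apply: eq_bigr => y h; rewrite !mxE h scale1r.
by move=> y /negbTE h; rewrite !mxE h scale0r.
Qed.

Lemma sel_in j e (y : 'I_(size (B j))) (T : zmodType) (F : 'I_(size (B j)) -> T) :
  bn y = e -> \sum_(y' | e == bn y') F y' = F y.
Proof.
move=> hy; rewrite (big_pred1 y) // => y'; rewrite -hy /=.
by apply/eqP/eqP => [e'|->]; [apply: bn_inj|].
Qed.

Lemma sel_out j e (T : zmodType) (F : 'I_(size (B j)) -> T) :
  e \notin B j -> \sum_(y' | e == bn y') F y' = 0.
Proof.
move=> h; rewrite big_pred0 // => y; apply/negbTE; apply: contra h => /eqP ->; exact: bn_in.
Qed.

Lemma urow_dl k m : (m <= Dm)%N -> urow Dm k *m dl K Dm m = urow m k.
Proof.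
move=> hm; apply/rowP => j; rewrite !mxE.
case: (boolP ((j : nat) == k)) => [/eqP ejk|njk].
  have lt : (k < Dm)%N by rewrite -ejk; exact: leq_trans (ltn_ord j) hm.
  rewrite (bigD1 (Ordinal lt)) //= !mxE /= eqxx ejk eqxx mul1r big1 ?addr0 //.
  move=> z nz; rewrite !mxE; case: eqP => [e|]; rewrite ?mul0r //.
  by case/eqP: nz; apply: val_inj.
rewrite big1 // => z _; rewrite !mxE.
case: eqP => [e|]; rewrite ?mul0r //; case: eqP => [e'|]; rewrite ?mulr0 //.
by move: njk; rewrite -e' e eqxx.
Qed.

Lemma row1_urow m (l : 'I_m) : row l (1%:M : 'M[K]_m) = urow m l.
Proof. by apply/rowP => z; rewrite !mxE eq_sym. Qed.

Lemma sorted_rcons2 (q : seq Q1) b a :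
  sorted (rr s t I) (rcons (rcons q b) a) = sorted (rr s t I) (rcons q b) && rr s t I b a.
Proof.
case: q => [|c q] /=; first by rewrite andbT.
by rewrite rcons_path last_rcons.
Qed.

Lemma wf_rcons2 i (q : seq Q1) b a :
  wf (i, rcons (rcons q b) a) = wf (i, rcons q b) && rr s t I b a.
Proof.
rewrite /wf /= sorted_rcons2.
case: q => [|c q] /=; rewrite /rr; first by case: (t b == s a); case: (I a b); case: (s b == i).
by case: (path _ _ _); case: (t b == s a); case: (I a b); case: (s c == i).
Qed.

Lemma endv_rcons i q a : endv (i, rcons q a) = t a.
Proof. by rewrite /endv /= map_rcons last_rcons. Qed.

Lemma wf_prefix i q b : wf (i, rcons q b) -> wf (i, q) && (endv (i, q) == s b).
Proof.
case/lastP: q => [|q c].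
  by rewrite /wf /endv /= eq_sym.
rewrite wf_rcons2 endv_rcons => /andP [h1 /andP [h2 _]]; rewrite h1 h2 //.
Qed.

Lemma bad_ext i p a k : wf (i, p) -> endv (i, p) = s a -> (k < d i)%N ->
  ((i, rcons p a), k) \notin B (t a) -> exists p' b, p = rcons p' b /\ I a b.
Proof.
move=> hw he hk; rewrite memB /= endv_rcons eqxx hk andbT.
case/lastP: p hw he => [|p' b] hw he.
  by rewrite /wf /= -he /endv /= eqxx.
rewrite wf_rcons2 hw /= /rr -he endv_rcons eqxx /= andbT negbK => h.
by exists p', b.
Qed.

Lemma gm_hom : @is_hom K (lamBQ HI) Frep N gm.
Proof.
move=> a /=; apply/row_matrixP => x.
rewrite (rowsel (fun x => ext a (bn x))) row_mul rowK.
have := bn_in x; rewrite memB.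
case: (bn x) => [[i p] k] /= /and3P [hw /eqP he hk].
case hin: (((i, rcons p a), k) \in B (t a)).
  have [y hy] := bn_ex hin.
  rewrite /ext /= (sel_in _ hy) rowK hy /= nhp_rcons /nh.
  rewrite -!mulmxA [dl K _ Dm *m _]dl_mul ?d_le // dl_id mulmx1.
  by rewrite !mulmxA.
have [p' [b [ep hab]]] := bad_ext hw he hk (negbT hin).
rewrite /ext /= (sel_out _ (negbT hin)) ep nhp_rcons /nh.
have ebt : t b = s a by rewrite -he ep endv_rcons.
rewrite -!mulmxA [dl K (d (t b)) Dm *m _]mulmxA dl_mul ?d_le //.
by rewrite HN // !mulmx0.
Qed.

Definition Sm j : 'M[K]_(d j, size (B j)) :=
  \matrix_(l, x) ((((j, [::]), (l : nat)) == bn x)%:R).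

Lemma gm_full j : row_full (gm j).
Proof.
apply: (@rank_sel _ _ _ _ (Sm j)); apply/row_matrixP => l.
rewrite (rowsel (fun l : 'I_(d j) => ((j, [::]), (l : nat)))).
have hin : ((j, [::]), (l : nat)) \in B j by rewrite memB /= /endv /= eqxx ltn_ord.
have [y hy] := bn_ex hin.
by rewrite (sel_in _ hy) rowK hy /= mulmx1 urow_dl ?d_le // row1_urow.
Qed.

Lemma F_sat : forall b a, I b a ->
  rmap Frep a *m (dl K (rdim Frep (t a)) (rdim Frep (s b)) *m rmap Frep b) = 0.
Proof.
move=> b a h /=; have e := HI h; rewrite -e dl_id mul1mx.
apply/row_matrixP => x; rewrite row0 (rowsel (fun x => ext a (bn x))).
have := bn_in x; rewrite memB.
case: (bn x) => [[i p] k] /= /and3P [hw /eqP he hk].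
case hin: (((i, rcons p a), k) \in B (t a)); last by rewrite /ext /= (sel_out _ (negbT hin)).
have [y hy] := bn_ex hin.
rewrite /ext /= (sel_in _ hy) -[Fm _ _ b]mulmx1 (rowsel (fun x => ext b (bn x))) hy /=.
rewrite sel_out // memB /= negb_and; apply/orP; left.
by rewrite wf_rcons2 /rr e eqxx h /= andbF.
Qed.

Lemma F_exact al be : I al be -> forall v : 'rV[K]_(size (B (s al))),
  v *m rmap Frep al = 0 ->
  (v <= rmap Frep be *m dl K (rdim Frep (t be)) (rdim Frep (s al)))%MS.
Proof.
move=> h v hv /=; have e := HI h; rewrite e dl_id mulmx1.
rewrite (row_sum_delta v); apply: summx_sub => x _.
have := bn_in x; rewrite memB.
case ex: (bn x) => [[i p] k] /= /and3P [hw /eqP he hk].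
case hin: (((i, rcons p al), k) \in B (t al)).
  have [y hy] := bn_ex hin.
  suff hvx : (v *m rmap Frep al) 0 y = v 0 x.
    by move: hvx; rewrite hv mxE => <-; rewrite scale0r sub0mx.
  rewrite mxE (bigD1 x) //= big1 ?addr0 ?mxE ?ex ?hy ?eqxx ?mulr1 //.
  move=> z nz; rewrite mxE hy; case: eqP => [ez|]; rewrite ?mulr0 //.
  case/eqP: nz; apply: bn_inj; rewrite ex.
  move: ez; case: (bn z) => [[i' p'] k'] /= [-> /rcons_inj [->] ->] //.
have [p' [b [ep hab]]] := bad_ext hw he hk (negbT hin).
have ebt : t b = s al by rewrite -he ep endv_rcons.
have eb : b = be by apply: (Huniq ebt hab (e : t be = s al) h).
subst b p.
have hin' : ((i, p'), k) \in B (s be).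
  by have := wf_prefix hw; rewrite memB /= hk andbT.
have [x' hx'] := bn_ex hin'.
apply: scalemx_sub.
suff <- : row x' (Fm (s be) (s al) be) = 'e_x by apply: row_sub.
apply/rowP => y; rewrite !mxE hx' /ext /= -ex.
suff -> : (bn x == bn y) = (y == x) by [].
by apply/eqP/eqP => [/bn_inj ->|->].
Qed.

End Free.

End PartB.
Import PartB.

Module PartC.
Local Open Scope ring_scope.

Lemma key_proj (K : fieldType) (Q0 Q1 : finType) (s t : Q1 -> Q0) (I : rel Q1)
  (HI : forall b a, I b a -> t a = s b)
  (Huniq : forall a b b', t b = s a -> I a b -> t b' = s a -> I a b' -> b = b')
  (n : nat) (Hn : forall p, nonzero_path s t I p -> (size p < n)%N)
  (P : rep K (lamQ s t)) :
  @projective_rep K (lamBQ HI) P -> forall al be, I al be ->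
  forall q (V : 'M[K]_(q, rdim P (s al))), V *m rmap P al = 0 ->
  (V <= rmap P be *m dl K (rdim P (t be)) (rdim P (s al)))%MS.
Proof.
case=> satP lift al be hab q V hV.
have HN := (@satE K (lamBQ HI) P).1 satP.
have [h [hh hg]] := lift (Frep I n P) P (gm I n P) (fun i => 1%:M)
   ((@satE K (lamBQ HI) _).2 (F_sat HI Hn P)) satP (gm_hom Hn HN)
   (fun a => etrans (mulmx1 _) (esym (mul1mx _))) (gm_full Hn P).
apply/row_subP => r; set v := row r V.
have hv : v *m rmap P al = 0 by rewrite /v -row_mul hV row0.
have hvh : (v *m h (s al)) *m rmap (Frep I n P) al = 0.
  by rewrite -mulmxA -hh mulmxA hv mul0mx.
have := F_exact HI Huniq Hn hab hvh.
case/submxP => W hW.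
have e : t be = s al := HI _ _ hab.
have -> : v = v *m h (s al) *m gm I n P (s al) by rewrite -mulmxA hg mulmx1.
rewrite hW -!mulmxA.
rewrite (dl_commute (gm I n P) e).
rewrite [rmap (Frep I n P) be *m _]mulmxA (gm_hom (HI:=HI) Hn HN be) -!mulmxA.
rewrite mulmxA; exact: submxMl.
Qed.

End PartC.
Import PartC.

Module PartD.
Local Open Scope ring_scope.

Section Transp.
Variable K : fieldType.
Variables (Q0 Q1 : finType) (s t : Q1 -> Q0).

Definition trrep (M : rep K (lamQ s t)) : rep K (lamQ t s) :=
  @Rep K (lamQ t s) (rdim M) (fun a => (rmap M a)^T).

Lemma sat_tr (I : rel Q1) (M : rep K (lamQ s t)) :
  (forall b a, I b a -> rmap M a *m (dl K (rdim M (t a)) (rdim M (s b)) *m rmap M b) = 0) ->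
  forall b a, I a b -> (rmap M a)^T *m (dl K (rdim M (s a)) (rdim M (t b)) *m (rmap M b)^T) = 0.
Proof.
move=> H b a h; have := H a b h.
move/(congr1 trmx); rewrite trmx0 !trmx_mul dl_tr => <-.
by rewrite mulmxA.
Qed.

Lemma nz_rev (I : rel Q1) p : nonzero_path t s (fun b a => I a b) p -> nonzero_path s t I (rev p).
Proof.
move=> H a b p1 p2 e.
have e' : p = rev p2 ++ b :: a :: rev p1.
  by rewrite -(revK p) e rev_cat !rev_cons -!cats1 -!catA.
by have [h1 h2] := H b a _ _ e'; split.
Qed.
End Transp.

Lemma tr_inj_proj (K : fieldType) (Q0 Q1 : finType) (s t : Q1 -> Q0) (I : rel Q1)
  (HI : forall b a, I b a -> t a = s b)
  (HIop : forall b a, (fun b a => I a b) b a -> s a = t b)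
  (J : rep K (lamQ s t)) :
  @injective_rep K (lamBQ HI) J -> @projective_rep K (lamBQ HIop) (trrep J).
Proof.
case=> satJ ext; have sJ := (@satE K (lamBQ HI) J).1 satJ.
split.
  apply/(@satE K (lamBQ HIop)) => b a h /=; exact: sat_tr sJ b a h.
move=> M N g f satM satN hg hf fg.
have sM := (@satE K (lamBQ HIop) M).1 satM.
have sN := (@satE K (lamBQ HIop) N).1 satN.
have hg' : @is_hom K (lamBQ HI) (trrep N) (trrep M) (fun i => (g i)^T).
  by move=> a /=; rewrite -!trmx_mul hg.
have hf' : @is_hom K (lamBQ HI) (trrep N) J (fun i => (f i)^T).
  by move=> a /=; rewrite -!trmx_mul -hf /= trmx_mul trmxK.
have fg' : forall i, row_free (g i)^T.
  by move=> i; rewrite /row_free mxrank_tr; exact: fg i.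
have [h [hh hgh]] := ext (trrep N) (trrep M) (fun i => (g i)^T) (fun i => (f i)^T)
  ((@satE K (lamBQ HI) (trrep N)).2 (sat_tr sN)) ((@satE K (lamBQ HI) (trrep M)).2 (sat_tr sM))
  hg' hf' fg'.
exists (fun i => (h i)^T); split.
  by move=> a /=; rewrite -[rmap M a]trmxK -!trmx_mul (hh a).
by move=> i; rewrite -(trmxK (f i)) -hgh trmx_mul trmxK.
Qed.

Lemma key_inj (K : fieldType) (Q0 Q1 : finType) (s t : Q1 -> Q0) (I : rel Q1)
  (HI : forall b a, I b a -> t a = s b)
  (Huniq' : forall a c c', s c = t a -> I c a -> s c' = t a -> I c' a -> c = c')
  (n : nat) (Hn : forall p, nonzero_path s t I p -> (size p < n)%N)
  (J : rep K (lamQ s t)) :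
  @injective_rep K (lamBQ HI) J -> forall g a, I g a ->
  forall m (Y : 'M[K]_(m, rdim J (t a))),
  Y *m (dl K (rdim J (t a)) (rdim J (s g)) *m rmap J g) = 0 -> (Y <= rmap J a)%MS.
Proof.
move=> hJ g a hga m Y hY.
have HIop : forall b a, (fun b a => I a b) b a -> s a = t b.
  by move=> b a' h; rewrite (HI _ _ h).
have hP := tr_inj_proj HIop hJ.
have Hn' : forall p, nonzero_path t s (fun b a => I a b) p -> (size p < n)%N.
  by move=> p hp; rewrite -size_rev; apply: Hn; apply: nz_rev.
have Hu : forall a b b', s b = t a -> I b a -> s b' = t a -> I b' a -> b = b'.
  by move=> a' b b' e1 h1 e2 h2; apply: (Huniq' a').
have key := key_proj (I := fun b a => I a b) (HI := HIop) Hu Hn' hP hga.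
apply: (ker_dual (B := dl K (rdim J (t a)) (rdim J (s g)) *m rmap J g)) hY => q V hV.
rewrite trmx_mul dl_tr; exact: key hV.
Qed.

End PartD.
Import PartD.

Module PartE.

Lemma card_uniq (T : finType) (P : pred T) x y : (#|P| <= 1)%N -> P x -> P y -> x = y.
Proof. by move/card_le1_eqP => H px py; apply: H. Qed.

Section Cyc.
Variables (Q0 Q1 : finType) (s t : Q1 -> Q0) (I : rel Q1).
Hypothesis HI : forall b a, I b a -> t a = s b.
Hypothesis Huniq : forall a b b', t b = s a -> I a b -> t b' = s a -> I a b' -> b = b'.
Hypothesis Huniq' : forall a c c', s c = t a -> I c a -> s c' = t a -> I c' a -> c = c'.

Lemma cyc_def (a : Q1) p (hp : forall i, (i < size p)%N -> I (nth a p i) (nth a p (i.+1 %% size p))) x :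
  forall i, (i < size p)%N -> I (nth x p i) (nth x p (i.+1 %% size p)).
Proof.
move=> i hi; have hp0 : (0 < size p)%N by apply: leq_ltn_trans hi.
by rewrite (set_nth_default a x hi) (set_nth_default a x (ltn_pmod _ hp0)); apply: hp.
Qed.

Lemma cyc_succ a : is_cyc I a -> exists b, I a b /\ is_cyc I b.
Proof.
case=> p [up ap hp].
have hi : (index a p < size p)%N by rewrite index_mem.
have hp0 : (0 < size p)%N by apply: leq_ltn_trans hi.
set b := nth a p ((index a p).+1 %% size p).
exists b; split; first by have := hp _ hi; rewrite nth_index.
exists p; split => //; first by apply: mem_nth; rewrite ltn_pmod.
exact: (cyc_def hp b).
Qed.

Lemma cyc_pred a : is_cyc I a -> exists c, I c a /\ is_cyc I c.
Proof.
case=> p [up ap hp].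
have hi : (index a p < size p)%N by rewrite index_mem.
have hp0 : (0 < size p)%N by apply: leq_ltn_trans hi.
set j := (index a p + (size p).-1) %% size p.
have hj : (j < size p)%N by rewrite ltn_pmod.
have ej : j.+1 %% size p = index a p.
  rewrite -addn1 modnDml -addnA addn1 prednK // modnDr modn_small //.
exists (nth a p j); split; first by have := hp _ hj; rewrite ej nth_index.
exists p; split => //; first exact: mem_nth.
exact: (cyc_def hp (nth a p j)).
Qed.

Lemma cyc_back b a : I b a -> is_cyc I a -> is_cyc I b.
Proof.
move=> h ca; have [c [hc cc]] := cyc_pred ca.
by rewrite (Huniq' (esym (HI h)) h (esym (HI hc)) hc).
Qed.

Lemma cyc_fwd b a : I b a -> is_cyc I b -> is_cyc I a.
Proof.
move=> h cb; have [a' [ha ca]] := cyc_succ cb.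
by rewrite (Huniq (HI h) h (HI ha) ha).
Qed.

Local Open Scope ring_scope.
Variable K : fieldType.

Definition Rmap (M : rep K (ausQ s t I)) (a : Q1) :
  'M[K]_(rdim M (inl (s a)), rdim M (inl (t a))) :=
  match excluded_middle_informative (is_cyc I a) with
  | left h => rmap M (APlus (exist _ a h)) *m rmap M (AMinus (exist _ a h))
  | right h => rmap M (ANc (exist _ a h))
  end.

Definition Rrep (M : rep K (ausQ s t I)) : rep K (lamQ s t) :=
  @Rep K (lamQ s t) (fun i => rdim M (inl i)) (Rmap M).

Lemma Rmap_cyc M a (h : is_cyc I a) :
  Rmap M a = rmap M (APlus (exist _ a h)) *m rmap M (AMinus (exist _ a h)).
Proof.
rewrite /Rmap; case: excluded_middle_informative => [h'|h'].
  by rewrite (proof_irrelevance _ h' h).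
by case: (h' h).
Qed.

Lemma Rmap_ncyc M a (h : ~ is_cyc I a) : Rmap M a = rmap M (ANc (exist _ a h)).
Proof.
rewrite /Rmap; case: excluded_middle_informative => [h'|h'].
  by case: (h h').
by rewrite (proof_irrelevance _ h' h).
Qed.

Lemma RPhi (M : rep K (lamQ s t)) a : Rmap (Phi I M) a = rmap M a.
Proof.
case: (classic (is_cyc I a)) => h.
  by rewrite (Rmap_cyc _ h) /= mulmx_base.
by rewrite (Rmap_ncyc _ h).
Qed.

Lemma R_hom (M N : rep K (ausQ s t I)) (g : forall v, 'M[K]_(rdim M v, rdim N v)) :
  @is_hom K (ausBQ HI) M N g -> @is_hom K (lamBQ HI) (Rrep M) (Rrep N) (fun i => g (inl i)).
Proof.
move=> hg a /=; case: (classic (is_cyc I a)) => h.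
  rewrite !Rmap_cyc -mulmxA (hg (AMinus (exist _ a h))) mulmxA.
  by rewrite (hg (APlus (exist _ a h))) mulmxA.
by rewrite !Rmap_ncyc (hg (ANc (exist _ a h))).
Qed.

Lemma R_sat (M : rep K (ausQ s t I)) :
  (forall y x : ausA I, ausRel y x ->
     rmap M x *m (dl K (rdim M (ausT t x)) (rdim M (ausS s y)) *m rmap M y) = 0) ->
  forall b a, I b a ->
   Rmap M a *m (dl K (rdim M (inl (t a))) (rdim M (inl (s b))) *m Rmap M b) = 0.
Proof.
move=> H b a h.
case: (classic (is_cyc I a)) => ca.
  have cb := cyc_back h ca.
  have H' := H (APlus (exist _ b cb)) (AMinus (exist _ a ca)) h.
  rewrite (Rmap_cyc _ ca) (Rmap_cyc _ cb) -!mulmxA [dl K _ _ *m (_ *m _)]mulmxA.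
  by rewrite (mulmxA (rmap M (AMinus (exist _ a ca)))) H' mul0mx mulmx0.
have cb : ~ is_cyc I b by move=> cb; apply: ca; exact: cyc_fwd h cb.
rewrite (Rmap_ncyc _ ca) (Rmap_ncyc _ cb).
exact: (H (ANc (exist _ b cb)) (ANc (exist _ a ca)) h).
Qed.
End Cyc.

End PartE.
Import PartE.

Module PartF.
Local Open Scope ring_scope.

Section Main.
Variables (K : fieldType) (Q0 Q1 : finType) (s t : Q1 -> Q0) (I : rel Q1).
Hypothesis HI : forall b a, I b a -> t a = s b.
Hypothesis Huniq : forall a b b', t b = s a -> I a b -> t b' = s a -> I a b' -> b = b'.
Hypothesis Huniq' : forall a c c', s c = t a -> I c a -> s c' = t a -> I c' a -> c = c'.
Variable n : nat.
Hypothesis Hn : forall p, nonzero_path s t I p -> (size p < n)%N.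

Lemma Phi_sat (M : rep K (lamQ s t)) :
  (forall b a, I b a -> rmap M a *m (dl K (rdim M (t a)) (rdim M (s b)) *m rmap M b) = 0) ->
  forall y x : ausA I, ausRel y x ->
  rmap (Phi I M) x *m (dl K (rdim (Phi I M) (ausT t x)) (rdim (Phi I M) (ausS s y))
     *m rmap (Phi I M) y) = 0.
Proof.
move=> H y x; case: x => x; case: y => y //= h; first exact: H _ _ h.
have E := H _ _ h.
rewrite -(mulmx_base (rmap M (sval x))) -(mulmx_base (rmap M (sval y))) in E.
apply: (full_cancel (col_base_full (rmap M (sval x)))); rewrite mulmx0.
apply: (free_cancel (row_base_free (rmap M (sval y)))); rewrite mul0mx -E.
by rewrite !mulmxA.
Qed.

Lemma main_proj (P : rep K (lamQ s t)) :
  @projective_rep K (lamBQ HI) P -> @projective_rep K (ausBQ HI) (Phi I P).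
Proof.
move=> hP; have key := key_proj Huniq Hn hP.
case: hP => satP lift.
have sP := (@satE K (lamBQ HI) P).1 satP.
split; first by apply/(@satE K (ausBQ HI)); exact: Phi_sat sP.
move=> M N g f satM satN hg hf fg.
have sM := (@satE K (ausBQ HI) M).1 satM.
have sN := (@satE K (ausBQ HI) N).1 satN.
have hgR := R_hom hg.
have hfR : @is_hom K (lamBQ HI) P (Rrep N) (fun i => f (inl i)).
  by move=> a; rewrite -(RPhi I P a); exact: (R_hom hf a).
have [h [hh hgf]] := lift (Rrep M) (Rrep N) (fun i => g (inl i)) (fun i => f (inl i))
  ((@satE K (lamBQ HI) (Rrep M)).2 (R_sat HI Huniq Huniq' sM))
  ((@satE K (lamBQ HI) (Rrep N)).2 (R_sat HI Huniq Huniq' sN))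
  hgR hfR (fun i => fg (inl i)).
pose L (x : cycA I) := pinvmx (col_base (rmap P (sval x))).
have LC : forall x, L x *m col_base (rmap P (sval x)) = 1%:M.
  by move=> x; have := mulmxKpV (submx_full 1%:M (col_base_full (rmap P (sval x)))); rewrite mul1mx.
pose Y (x : cycA I) := h (s (sval x)) *m rmap M (APlus x).
have hCY : forall x, col_base (rmap P (sval x)) *m (L x *m Y x) = Y x.
  case=> a ca.
  have kerc : forall q (V : 'M[K]_(q, rdim P (s a))), V *m rmap P a = 0 ->
      V *m Y (exist _ a ca) = 0.
    move=> q V hV; have [be [hab cbe]] := cyc_succ ca.
    have := key a be hab q V hV; case/submxP => W hW.
    have e : t be = s a := HI hab.
    have E1 : rmap P be *m (dl K (rdim P (t be)) (rdim P (s a)) *m h (s a)) =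
       h (s be) *m (rmap M (APlus (exist _ be cbe)) *m (rmap M (AMinus (exist _ be cbe)) *m
         dl K (rdim M (inl (t be))) (rdim M (inl (s a))))).
      by rewrite (dl_commute h e) mulmxA (hh be) /= (Rmap_cyc _ cbe) !mulmxA.
    rewrite hW /Y /= -!mulmxA (mulmxA (dl K _ _) (h (s a))) (mulmxA (rmap P be)) E1.
    rewrite -!mulmxA (sM (APlus (exist _ a ca)) (AMinus (exist _ be cbe)) hab).
    by rewrite !mulmx0.
  set C := col_base (rmap P a).
  have eP : rmap P a = C *m row_base (rmap P a) by rewrite mulmx_base.
  set R := row_base (rmap P a); set Lx := L (exist _ a ca).
  have LCx : Lx *m C = 1%:M := LC (exist _ a ca).
  have hV : (1%:M - C *m Lx) *m rmap P a = 0.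
    have E2 : Lx *m rmap P a = R.
      transitivity (Lx *m (C *m R)); first by rewrite mulmx_base.
      by rewrite mulmxA LCx mul1mx.
    by rewrite mulmxBl mul1mx -(mulmxA C Lx) E2 mulmx_base subrr.
  have := kerc _ _ hV; rewrite mulmxBl mul1mx => /eqP; rewrite subr_eq0 => /eqP E.
  by rewrite mulmxA -E.
pose h' := fun v => match v as v0 return 'M[K]_(rdim (Phi I P) v0, rdim M v0) with
  | inl i => h i | inr x => L x *m Y x end.
exists h'; split.
  case=> [[a ca]|[a ca]|[a ca]] /=.
  - by rewrite (hh a) /= (Rmap_ncyc _ ca).
  - exact: (hCY (exist _ a ca)).
  - apply: (full_cancel (col_base_full (rmap P a))).
    rewrite mulmxA mulmx_base (hh a) mulmxA (hCY (exist _ a ca)) /Y /=.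
    by rewrite (Rmap_cyc _ ca) mulmxA.
case=> [i|[a ca]] /=; first exact: hgf.
apply: (full_cancel (col_base_full (rmap P a))).
rewrite mulmxA (hCY (exist _ a ca)) /Y /= -mulmxA (hg (APlus (exist _ a ca))) mulmxA.
by rewrite (hgf (s a)) (hf (APlus (exist _ a ca))).
Qed.

Lemma main_inj (J : rep K (lamQ s t)) :
  @injective_rep K (lamBQ HI) J -> @injective_rep K (ausBQ HI) (Phi I J).
Proof.
move=> hJ; have key := key_inj Huniq' Hn hJ.
case: hJ => satJ ext.
have sJ := (@satE K (lamBQ HI) J).1 satJ.
split; first by apply/(@satE K (ausBQ HI)); exact: Phi_sat sJ.
move=> L M g f satL satM hg hf fg.
have sL := (@satE K (ausBQ HI) L).1 satL.
have sM := (@satE K (ausBQ HI) M).1 satM.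
have hgR := R_hom hg.
have hfR : @is_hom K (lamBQ HI) (Rrep L) J (fun i => f (inl i)).
  by move=> a; rewrite -(RPhi I J a); exact: (R_hom hf a).
have [h [hh hgf]] := ext (Rrep L) (Rrep M) (fun i => g (inl i)) (fun i => f (inl i))
  ((@satE K (lamBQ HI) (Rrep L)).2 (R_sat HI Huniq Huniq' sL))
  ((@satE K (lamBQ HI) (Rrep M)).2 (R_sat HI Huniq Huniq' sM))
  hgR hfR (fun i => fg (inl i)).
pose Y (x : cycA I) := rmap M (AMinus x) *m h (t (sval x)).
have YJ : forall x, (Y x <= rmap J (sval x))%MS.
  case=> a ca; have [ga [hga cga]] := cyc_pred ca.
  apply: (key ga a hga).
  have e : t a = s ga := HI hga.
  rewrite /Y /= -mulmxA (mulmxA (h (t a))) -(dl_commute h e) -mulmxA -(hh ga) /=.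
  rewrite (Rmap_cyc _ cga) -!mulmxA (mulmxA (dl K _ _)).
  rewrite (mulmxA (rmap M (AMinus (exist _ a ca)))).
  by rewrite (sM (APlus (exist _ ga cga)) (AMinus (exist _ a ca)) hga) !mul0mx.
pose RJ (x : cycA I) := row_base (rmap J (sval x)).
have hYR : forall x, Y x *m pinvmx (RJ x) *m RJ x = Y x.
  by move=> x; apply: mulmxKpV; rewrite /RJ eq_row_base; exact: YJ.
pose h' := fun v => match v as v0 return 'M[K]_(rdim M v0, rdim (Phi I J) v0) with
  | inl i => h i | inr x => Y x *m pinvmx (RJ x) end.
exists h'; split.
  case=> [[a ca]|[a ca]|[a ca]] /=.
  - by rewrite -(Rmap_ncyc _ ca) (hh a).
  - apply: (free_cancel (row_base_free (rmap J a))).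
    rewrite -mulmxA (hYR (exist _ a ca)) /Y /= mulmxA -(Rmap_cyc _ ca) (hh a).
    by rewrite -mulmxA mulmx_base.
  - by rewrite (hYR (exist _ a ca)).
case=> [i|[a ca]] /=; first exact: hgf.
apply: (free_cancel (row_base_free (rmap J a))).
rewrite -mulmxA (hYR (exist _ a ca)) /Y /= mulmxA -(hg (AMinus (exist _ a ca))).
by rewrite -mulmxA (hgf (t a)) (hf (AMinus (exist _ a ca))).
Qed.

End Main.

End PartF.
Import PartF.

Theorem lemma3p4 (K : closedFieldType) (Q0 Q1 : finType) (s t : Q1 -> Q0)
  (I : rel Q1) (HI : forall b a, I b a -> t a = s b) :
  gentle s t I -> fin_dim s t I ->
  (forall P : rep K (lamQ s t),
     @projective_rep K (lamBQ HI) P ->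
     @projective_rep K (ausBQ HI) (Phi I P)) /\
  (forall J : rep K (lamQ s t),
     @injective_rep K (lamBQ HI) J ->
     @injective_rep K (ausBQ HI) (Phi I J)).
Proof.
move=> [_ [_ hg]] [n Hn].
have Huniq : forall a b b', t b = s a -> I a b -> t b' = s a -> I a b' -> b = b'.
  move=> a b b' e h e' h'; have [_ _ c3 _] := hg a.
  by apply: (card_uniq c3); rewrite /= ?e ?e' eqxx ?h ?h'.
have Huniq' : forall a c c', s c = t a -> I c a -> s c' = t a -> I c' a -> c = c'.
  move=> a c c' e h e' h'; have [_ _ _ c4] := hg a.
  by apply: (card_uniq c4); rewrite /= ?e ?e' eqxx ?h ?h'.
split => [P hP|J hJ].
  exact: (main_proj Huniq Huniq' Hn hP).
exact: (main_inj Huniq Huniq' Hn hJ).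
Qed.
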